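(* Let $R$ be a Noetherian Banach–Tate ring with norm $|\cdot|$ and multiplicative pseudo-uniformizer $\varpi$, and assume there exists a continuous ring homomorphism $\mathbb{Z}_p\to R$. Then there exists a norm $|\cdot|'$ on $R$ such that: $(R,|\cdot|')$ is a Banach–Tate $\mathbb{Z}_p$-algebra; $|\cdot|'$ is bounded-equivalent to $|\cdot|^s$ for some real $s>0$; and $\varpi$ is a multiplicative pseudo-uniformizer for $|\cdot|'$.
   Context: Norms are non-archimedean, submultiplicative, with $|1|=1$ and $|r|=0\iff r=0$. A Banach–Tate ring is a complete normed ring containing a unit $\varpi$ with $|\varpi|<1$ and $|\varpi s|=|\varpi||s|$ for all $s$ (a multiplicative pseudo-uniformizer). A Banach–Tate $\mathbb{Z}_p$-algebra is a Banach–Tate ring $R$ together with a ring homomorphism $\mathbb{Z}_p\to R$ which is norm-decreasing for the usual $p$-adic norm $|x|_p=p^{-\mathrm{ord}_p(x)}$ on $\mathbb{Z}_p$. Two norms $|\cdot|_1,|\cdot|_2$ are bounded-equivalent if there exist $C_1,C_2>0$ with $C_1|r|_1\le|r|_2\le C_2|r|_1$ for all $r$. *)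

(* Defs.v *)
From HB Require Import structures.
From Stdlib Require Import Reals ZArith Znumtheory ClassicalEpsilon Lia.
From mathcomp Require Import all_boot all_order all_algebra.

Set Implicit Arguments.
Unset Strict Implicit.
Unset Printing Implicit Defensive.

(* Z_p, modelled as compatible sequences (a_n)_n with a_n in [0, p^n) *)
(* and a_{n+1} = a_n mod p^n (i.e. Z_p = lim Z/p^n Z).                *)

Local Open Scope Z_scope.

Definition is_padic (p : positive) (a : nat -> Z) : Prop :=
  forall n : nat,
    (0 <= a n < Z.pos p ^ Z.of_nat n) /\
    Z.modulo (a (S n)) (Z.pos p ^ Z.of_nat n) = a n.

Definition padicZ (p : positive) : Type := {a : nat -> Z | is_padic p a}.

Definition zp_seq (p : positive) (x : padicZ p) : nat -> Z := proj1_sig x.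

Lemma ppow_pos (p : positive) (n : nat) : (0 < Z.pos p ^ Z.of_nat n).
Proof. apply Z.pow_pos_nonneg; lia. Qed.

Lemma reduce_padic (p : positive) (b : nat -> Z) :
  (forall n, Z.modulo (b (S n)) (Z.pos p ^ Z.of_nat n)
             = Z.modulo (b n) (Z.pos p ^ Z.of_nat n)) ->
  is_padic p (fun n => Z.modulo (b n) (Z.pos p ^ Z.of_nat n)).
Proof.
move=> Hb n; split.
  by apply Z.mod_pos_bound; apply ppow_pos.
rewrite -[RHS](Hb n); symmetry; apply Zmod_div_mod; try apply ppow_pos.
exists (Z.pos p); rewrite Nat2Z.inj_succ Z.pow_succ_r; lia.
Qed.

Lemma padic_mod (p : positive) (x : padicZ p) (n : nat) :
  Z.modulo (zp_seq x (S n)) (Z.pos p ^ Z.of_nat n) = zp_seq x n.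
Proof. by case: x => a Ha; case: (Ha n). Qed.

Lemma padic_add_ok (p : positive) (x y : padicZ p) :
  is_padic p (fun n => Z.modulo (zp_seq x n + zp_seq y n) (Z.pos p ^ Z.of_nat n)).
Proof.
apply reduce_padic => n.
have H0 : (Z.pos p ^ Z.of_nat n <> 0) by have := ppow_pos p n; lia.
by rewrite Z.add_mod // !padic_mod.
Qed.

Lemma padic_mul_ok (p : positive) (x y : padicZ p) :
  is_padic p (fun n => Z.modulo (zp_seq x n * zp_seq y n) (Z.pos p ^ Z.of_nat n)).
Proof.
apply reduce_padic => n.
have H0 : (Z.pos p ^ Z.of_nat n <> 0) by have := ppow_pos p n; lia.
by rewrite Z.mul_mod // !padic_mod.
Qed.

Lemma padic_one_ok (p : positive) :
  is_padic p (fun n => Z.modulo 1 (Z.pos p ^ Z.of_nat n)).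
Proof. by apply reduce_padic. Qed.

Lemma padic_zero_ok (p : positive) :
  is_padic p (fun n => Z.modulo 0 (Z.pos p ^ Z.of_nat n)).
Proof. by apply reduce_padic. Qed.

Definition zp_add (p : positive) (x y : padicZ p) : padicZ p := exist _ _ (padic_add_ok x y).
Definition zp_mul (p : positive) (x y : padicZ p) : padicZ p := exist _ _ (padic_mul_ok x y).
Definition zp_one (p : positive) : padicZ p := exist _ _ (padic_one_ok p).
Definition zp_zero (p : positive) : padicZ p := exist _ _ (padic_zero_ok p).

(* p-adic norm |x|_p = p^(-ord_p x), with |0|_p = 0.  The residue a_n is 0
   exactly when p^n divides x, so ord_p x = (min {n | a_n <> 0}) - 1. *)
Definition zp_nonzero_at (p : positive) (x : padicZ p) : pred nat :=
  fun n => negb (Z.eqb (zp_seq x n) 0).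

Definition padic_norm (p : positive) (x : padicZ p) : R :=
  match excluded_middle_informative (exists n, zp_nonzero_at x n) with
  | left H => Rinv (IZR (Z.pos p)) ^ (ex_minn H).-1
  | right _ => IZR 0
  end.

Local Close Scope Z_scope.
Local Open Scope ring_scope.

Definition is_norm (A : comRingType) (nrm : A -> R) : Prop :=
  (forall x : A, Rle (IZR 0) (nrm x)) /\
  (forall x : A, nrm x = IZR 0 <-> x = 0) /\
  (forall x : A, nrm (- x) = nrm x) /\
  (forall x y : A, Rle (nrm (x + y)) (Rmax (nrm x) (nrm y))) /\
  (forall x y : A, Rle (nrm (x * y)) (Rmult (nrm x) (nrm y))) /\
  nrm 1 = IZR 1.

Definition is_complete (A : comRingType) (nrm : A -> R) : Prop :=
  forall u : nat -> A,
    (forall eps : R, Rlt (IZR 0) eps ->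
       exists N : nat, forall m n : nat, (N <= m)%N -> (N <= n)%N ->
         Rlt (nrm (u m - u n)) eps) ->
    exists l : A, forall eps : R, Rlt (IZR 0) eps ->
       exists N : nat, forall n : nat, (N <= n)%N -> Rlt (nrm (u n - l)) eps.

Definition is_mult_pseudo_unif (A : comRingType) (nrm : A -> R) (w : A) : Prop :=
  (exists v : A, w * v = 1) /\
  Rlt (nrm w) (IZR 1) /\
  (forall s : A, nrm (w * s) = Rmult (nrm w) (nrm s)).

Definition is_banach_tate (A : comRingType) (nrm : A -> R) (w : A) : Prop :=
  is_norm nrm /\ is_complete nrm /\ is_mult_pseudo_unif nrm w.

Definition is_ideal (A : comRingType) (I : A -> Prop) : Prop :=
  I 0 /\ (forall x y, I x -> I y -> I (x + y)) /\ (forall r x, I x -> I (r * x)).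

Definition noetherian (A : comRingType) : Prop :=
  forall I : A -> Prop, is_ideal I ->
    exists s : seq A, forall x : A,
      I x <-> exists c : 'I_(size s) -> A, x = \sum_(i < size s) c i * s`_i.

Definition zp_ring_hom (p : positive) (A : comRingType) (f : padicZ p -> A) : Prop :=
  (forall x y, f (zp_add x y) = f x + f y) /\
  (forall x y, f (zp_mul x y) = f x * f y) /\
  f (zp_one p) = 1.

(* continuity for the p-adic topology on Z_p (basic neighbourhoods of x
   are {y | y_N = x_N}) and the norm topology on A *)
Definition zp_continuous (p : positive) (A : comRingType) (nrm : A -> R)
    (f : padicZ p -> A) : Prop :=
  forall (x : padicZ p) (eps : R), Rlt (IZR 0) eps ->
    exists N : nat, forall y : padicZ p, zp_seq y N = zp_seq x N ->
      Rlt (nrm (f y - f x)) eps.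

Definition zp_norm_decreasing (p : positive) (A : comRingType) (nrm : A -> R)
    (f : padicZ p -> A) : Prop :=
  forall x : padicZ p, Rle (nrm (f x)) (padic_norm x).

Definition is_banach_tate_zp_alg (p : positive) (A : comRingType) (nrm : A -> R)
    (w : A) (f : padicZ p -> A) : Prop :=
  is_banach_tate nrm w /\ zp_ring_hom f /\ zp_norm_decreasing nrm f.

(* x^s for x >= 0 and real s > 0, with 0^s = 0 *)
Definition rpow (x s : R) : R :=
  if Req_EM_T x (IZR 0) then IZR 0 else Rpower x s.

Definition bounded_equivalent (A : Type) (n1 n2 : A -> R) : Prop :=
  exists C1 C2 : R, Rlt (IZR 0) C1 /\ Rlt (IZR 0) C2 /\
    forall r : A, Rle (Rmult C1 (n1 r)) (n2 r) /\ Rle (n2 r) (Rmult C2 (n1 r)).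

(* Main.v *)
Require Import Defs.
From Stdlib Require Import Reals ZArith Znumtheory.
From mathcomp Require Import all_boot all_order all_algebra.
From Stdlib Require Import Lia Lra Psatz ClassicalEpsilon FunctionalExtensionality ProofIrrelevance.
Set Implicit Arguments. Unset Strict Implicit. Unset Printing Implicit Defensive.
Import GRing.Theory.
Local Open Scope Z_scope.

Lemma padic_eq (p : positive) (x y : padicZ p) :
  (forall n, zp_seq x n = zp_seq y n) -> x = y.
Proof.
case: x => a Ha; case: y => b Hb /= H.
have E : a = b by apply: functional_extensionality.
subst b; by rewrite (proof_irrelevance _ Ha Hb).
Qed.

Definition zc (p : positive) (c : Z) : padicZ p :=
  exist _ _ (@reduce_padic p (fun _ => c) (fun n => erefl)).

Lemma ppow_neq0 (p : positive) (n : nat) : (Z.pos p ^ Z.of_nat n <> 0).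
Proof. have := ppow_pos p n; lia. Qed.

Lemma zc_mul (p : positive) a b : zp_mul (zc p a) (zc p b) = zc p (a * b).
Proof. apply: padic_eq => n /=. by rewrite -Z.mul_mod //; apply ppow_neq0. Qed.

Lemma zc_add (p : positive) a b : zp_add (zc p a) (zc p b) = zc p (a + b).
Proof. apply: padic_eq => n /=. by rewrite -Z.add_mod //; apply ppow_neq0. Qed.

Lemma zc_one (p : positive) : zp_one p = zc p 1.
Proof. by apply: padic_eq. Qed.
Lemma zc_zero (p : positive) : zp_zero p = zc p 0.
Proof. by apply: padic_eq. Qed.

Lemma padic_range (p : positive) (x : padicZ p) n :
  (0 <= zp_seq x n < Z.pos p ^ Z.of_nat n).
Proof. by case: x => a Ha; case: (Ha n). Qed.

Lemma padic_mod_add (p : positive) (x : padicZ p) n d :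
  Z.modulo (zp_seq x (Nat.add n d)) (Z.pos p ^ Z.of_nat n) = zp_seq x n.
Proof.
elim: d => [|d IH].
  rewrite Nat.add_0_r; apply Z.mod_small; apply padic_range.
rewrite Nat.add_succ_r.
rewrite (@Zmod_div_mod (Z.pos p ^ Z.of_nat n) (Z.pos p ^ Z.of_nat (Nat.add n d))).
- by rewrite padic_mod.
- apply ppow_pos.
- apply ppow_pos.
- exists (Z.pos p ^ Z.of_nat d).
  rewrite Nat2Z.inj_add Z.pow_add_r; lia.
Qed.

Local Close Scope Z_scope.
Local Open Scope ring_scope.

Lemma f_zero (p : positive) (A : comRingType) (f : padicZ p -> A) :
  zp_ring_hom f -> f (zp_zero p) = 0.
Proof.
move=> [fa [fm f1]].
have H : f (zp_zero p) = f (zp_zero p) + f (zp_zero p).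
  by rewrite -fa zc_zero zc_add.
apply: (@addrI _ (f (zp_zero p))). by rewrite addr0 -H.
Qed.

Lemma f_nat (p : positive) (A : comRingType) (f : padicZ p -> A) :
  zp_ring_hom f -> forall m : nat, f (zc p (Z.of_nat m)) = m%:R.
Proof.
move=> hf; have [fa [fm f1]] := hf.
elim=> [|m IH]; first by rewrite -zc_zero f_zero.
rewrite Nat2Z.inj_succ -Z.add_1_r -zc_add fa IH -zc_one f1.
by rewrite -natr1.
Qed.

Lemma f_pow (p : positive) (A : comRingType) (f : padicZ p -> A) :
  zp_ring_hom f -> forall k : nat,
  f (zc p (Z.pos p ^ Z.of_nat k)) = f (zc p (Z.pos p)) ^+ k.
Proof.
move=> hf; have [fa [fm f1]] := hf.
elim=> [|k IH]; first by rewrite expr0 /= -zc_one f1.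
rewrite Nat2Z.inj_succ Z.pow_succ_r; last lia.
by rewrite -zc_mul fm IH exprS.
Qed.
Local Open Scope Z_scope.
Lemma padic_divk (p : positive) (z : padicZ p) (k m : nat) :
  zp_seq z k = 0 ->
  zp_seq z (Nat.add m k) = Z.pos p ^ Z.of_nat k * (zp_seq z (Nat.add m k) / Z.pos p ^ Z.of_nat k).
Proof.
move=> Hk.
have H : zp_seq z (Nat.add m k) mod Z.pos p ^ Z.of_nat k = 0.
  by rewrite Nat.add_comm padic_mod_add.
have := Z_div_mod_eq_full (zp_seq z (Nat.add m k)) (Z.pos p ^ Z.of_nat k).
rewrite H; lia.
Qed.

Lemma padic_div_ok (p : positive) (z : padicZ p) (k : nat) :
  zp_seq z k = 0 ->
  is_padic p (fun n => zp_seq z (Nat.add n k) / Z.pos p ^ Z.of_nat k).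
Proof.
move=> Hk n; split.
  have [H1 H2] := padic_range z (Nat.add n k).
  split; first by apply Z.div_pos => //; apply ppow_pos.
  apply Z.div_lt_upper_bound; first by apply ppow_pos.
  have E : Z.pos p ^ Z.of_nat (Nat.add n k) = Z.pos p ^ Z.of_nat k * Z.pos p ^ Z.of_nat n.
    by rewrite Nat2Z.inj_add Z.pow_add_r; lia.
  lia.
set t := zp_seq z (Nat.add (S n) k) / Z.pos p ^ Z.of_nat k.
have Et := padic_divk (S n) Hk.
have E2 : zp_seq z (Nat.add n k) = Z.pos p ^ Z.of_nat k * (t mod Z.pos p ^ Z.of_nat n).
  rewrite -(padic_mod z (Nat.add n k)) -Nat.add_succ_l Et.
  rewrite Nat2Z.inj_add Z.pow_add_r; try lia.
  rewrite (Z.mul_comm (Z.pos p ^ Z.of_nat n)) Z.mul_mod_distr_l //; apply ppow_neq0.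
rewrite E2 Z.mul_comm Z.div_mul //; apply ppow_neq0.
Qed.

Definition padic_div (p : positive) (z : padicZ p) (k : nat) (Hk : zp_seq z k = 0) : padicZ p :=
  exist _ _ (padic_div_ok Hk).

Lemma padic_div_spec (p : positive) (z : padicZ p) (k : nat) (Hk : zp_seq z k = 0) :
  z = zp_mul (zc p (Z.pos p ^ Z.of_nat k)) (padic_div Hk).
Proof.
apply: padic_eq => n /=.
rewrite Z.mul_mod_idemp_l; last by apply ppow_neq0.
by rewrite -padic_divk // padic_mod_add.
Qed.

Lemma padic_split_ok (p : positive) (u : padicZ p) (N : nat) :
  is_padic p (fun n => (zp_seq u n - zp_seq u N) mod Z.pos p ^ Z.of_nat n).
Proof.
apply reduce_padic => n.
have H0 := @ppow_neq0 p n.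
rewrite Zminus_mod padic_mod [RHS]Zminus_mod (Z.mod_small (zp_seq u n)) //; apply padic_range.
Qed.

Lemma padic_split (p : positive) (u : padicZ p) (N : nat) :
  u = zp_add (zc p (zp_seq u N)) (exist _ _ (padic_split_ok u N)).
Proof.
apply: padic_eq => n /=.
have H0 := @ppow_neq0 p n.
rewrite -Z.add_mod // Z.add_comm Z.sub_add Z.mod_small //; apply padic_range.
Qed.

Lemma padic_split_N (p : positive) (u : padicZ p) (N : nat) :
  zp_seq (exist _ _ (padic_split_ok u N)) N = 0.
Proof. by rewrite /= Z.sub_diag Z.mod_0_l //; apply ppow_neq0. Qed.
Local Close Scope Z_scope.
Local Open Scope R_scope.

Definition rsup (T : Type) (g : T -> R) : R :=
  match excluded_middle_informative
          (bound (fun r => exists t, r = g t) /\ exists x, (fun r => exists t, r = g t) x) with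
  | left H => proj1_sig (completeness _ (proj1 H) (proj2 H))
  | right _ => 0
  end.

Lemma rsup_ub (T : Type) (g : T -> R) (M : R) (t0 : T) :
  (forall t, g t <= M) -> g t0 <= rsup g.
Proof.
move=> HM; rewrite /rsup.
case: excluded_middle_informative => [H|H].
  case: (completeness _ _ _) => m [Hu Hl] /=. apply: Hu. by exists t0.
exfalso; apply: H; split; last by exists (g t0), t0.
by exists M => r [t ->].
Qed.

Lemma rsup_le (T : Type) (g : T -> R) (M : R) (t0 : T) :
  (forall t, g t <= M) -> rsup g <= M.
Proof.
move=> HM; rewrite /rsup.
case: excluded_middle_informative => [H|H].
  case: (completeness _ _ _) => m [Hu Hl] /=. apply: Hl. by move=> r [t ->].
exfalso; apply: H; split; last by exists (g t0), t0.
by exists M => r [t ->].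
Qed.

Lemma pow_le_self (x : R) (s : nat) : 0 <= x <= 1 -> (1 <= s)%nat -> x ^ s <= x.
Proof.
move=> [h0 h1]; case: s => [//|k] _.
have Hk : x ^ k <= 1.
  elim: k => [|k IH] /=; first lra.
  have := pow_le x k h0; nra.
have := pow_le x k h0. rewrite /=; nra.
Qed.

Lemma pow_Rmax (u v : R) (s : nat) : 0 <= u -> 0 <= v -> Rmax u v ^ s = Rmax (u ^ s) (v ^ s).
Proof.
move=> hu hv; rewrite /Rmax.
destruct (Rle_dec u v) as [h1|h1]; destruct (Rle_dec (u^s) (v^s)) as [h2|h2] => //.
- exfalso; apply: h2; apply pow_incr; split; lra.
- have : v ^ s <= u ^ s by apply pow_incr; split; lra. lra.
Qed.
Lemma div_le_of (a b c : R) : 0 < c -> a <= b * c -> a / c <= b.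
Proof.
move=> hc h; apply (Rmult_le_reg_r c) => //.
by rewrite /Rdiv Rmult_assoc Rinv_l ?Rmult_1_r; lra.
Qed.

Lemma le_div_of (a b c : R) : 0 < c -> a * c <= b -> a <= b / c.
Proof.
move=> hc h; apply (Rmult_le_reg_r c) => //.
by rewrite /Rdiv Rmult_assoc Rinv_l ?Rmult_1_r; lra.
Qed.
Lemma mul_of_le_div (a b c : R) : 0 < c -> a <= b / c -> c * a <= b.
Proof.
move=> hc h; have := Rmult_le_compat_l c _ _ (Rlt_le _ _ hc) h.
by rewrite /Rdiv (Rmult_comm b) -Rmult_assoc Rinv_r ?Rmult_1_l; lra.
Qed.
Local Close Scope R_scope.
Local Open Scope R_scope.

Definition an (A : comRingType) (nrm : A -> R) (s : nat) (x : A) : R := nrm x ^ s.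

Lemma an_ge0 (A : comRingType) (nrm : A -> R) s x : is_norm nrm -> 0 <= an nrm s x.
Proof. move=> [h0 _]; apply pow_le; apply h0. Qed.

Lemma an0 (A : comRingType) (nrm : A -> R) s : is_norm nrm -> (1 <= s)%nat -> an nrm s 0%R = 0.
Proof.
move=> [h0 [hz _]] hs; rewrite /an (proj2 (hz 0%R) erefl).
case: s hs => // k _; by rewrite /= Rmult_0_l.
Qed.

Lemma an_eq0 (A : comRingType) (nrm : A -> R) s x : is_norm nrm -> an nrm s x = 0 -> x = 0%R.
Proof. move=> [h0 [hz _]] H; apply hz; case: (Req_dec (nrm x) 0) => // h; exfalso; exact: (pow_nonzero (nrm x) s h H). Qed.

Lemma an1 (A : comRingType) (nrm : A -> R) s : is_norm nrm -> an nrm s 1%R = 1.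
Proof. move=> [_ [_ [_ [_ [_ h1]]]]]; by rewrite /an h1 pow1. Qed.

Lemma anN (A : comRingType) (nrm : A -> R) s x : is_norm nrm -> an nrm s (- x)%R = an nrm s x.
Proof. move=> [_ [_ [hN _]]]; by rewrite /an hN. Qed.

Lemma anD (A : comRingType) (nrm : A -> R) s x y : is_norm nrm ->
  an nrm s (x + y)%R <= Rmax (an nrm s x) (an nrm s y).
Proof.
move=> hn; have [h0 [_ [_ [hD _]]]] := hn.
rewrite /an -pow_Rmax //. apply pow_incr; split => //; apply hD.
Qed.

Lemma anM (A : comRingType) (nrm : A -> R) s x y : is_norm nrm ->
  an nrm s (x * y)%R <= an nrm s x * an nrm s y.
Proof.
move=> hn; have [h0 [_ [_ [_ [hM _]]]]] := hn.
rewrite /an -Rpow_mult_distr. apply pow_incr; split => //; apply hM.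
Qed.

Definition N1 (A : comRingType) (nrm : A -> R) (s : nat) (q : A) (pr : R) (x : A) : R :=
  rsup (fun n : nat => an nrm s (q ^+ n * x)%R * pr ^ n).

Lemma term_le (A : comRingType) (nrm : A -> R) s q pr K x n :
  is_norm nrm -> 1 <= pr -> (forall n, an nrm s (q ^+ n) * pr ^ n <= K) ->
  an nrm s (q ^+ n * x)%R * pr ^ n <= K * an nrm s x.
Proof.
move=> hn hpr hK.
have h1 := anM s (q ^+ n) x hn. have h2 := an_ge0 s x hn. have h3 := hK n.
have h4 : 0 <= pr ^ n by apply pow_le; lra.
have h5 := an_ge0 s (q ^+ n) hn.
nra.
Qed.

Lemma N1_ub (A : comRingType) (nrm : A -> R) s q pr K x n :
  is_norm nrm -> 1 <= pr -> (forall n, an nrm s (q ^+ n) * pr ^ n <= K) ->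
  an nrm s (q ^+ n * x)%R * pr ^ n <= N1 nrm s q pr x.
Proof.
move=> hn hpr hK; rewrite /N1.
apply: (@rsup_ub nat (fun n => an nrm s (q ^+ n * x)%R * pr ^ n) (K * an nrm s x) n) => m.
exact: term_le.
Qed.

Lemma N1_le (A : comRingType) (nrm : A -> R) s q pr K x M :
  is_norm nrm -> 1 <= pr -> (forall n, an nrm s (q ^+ n) * pr ^ n <= K) ->
  (forall n, an nrm s (q ^+ n * x)%R * pr ^ n <= M) -> N1 nrm s q pr x <= M.
Proof. move=> hn hpr hK H; exact: (@rsup_le nat (fun n => an nrm s (q ^+ n * x)%R * pr ^ n) M 0%nat). Qed.

Lemma N1_leK (A : comRingType) (nrm : A -> R) s q pr K x :
  is_norm nrm -> 1 <= pr -> (forall n, an nrm s (q ^+ n) * pr ^ n <= K) ->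
  N1 nrm s q pr x <= K * an nrm s x.
Proof. move=> hn hpr hK; apply: N1_le => // n; exact: term_le. Qed.

Lemma N1_ge (A : comRingType) (nrm : A -> R) s q pr K x :
  is_norm nrm -> 1 <= pr -> (forall n, an nrm s (q ^+ n) * pr ^ n <= K) ->
  an nrm s x <= N1 nrm s q pr x.
Proof.
move=> hn hpr hK; have := N1_ub x 0%nat hn hpr hK.
by rewrite expr0 mul1r /= Rmult_1_r.
Qed.

Lemma N1M (A : comRingType) (nrm : A -> R) s q pr K x y :
  is_norm nrm -> 1 <= pr -> (forall n, an nrm s (q ^+ n) * pr ^ n <= K) ->
  N1 nrm s q pr (x * y)%R <= an nrm s x * N1 nrm s q pr y.
Proof.
move=> hn hpr hK; apply: N1_le => // n.
have -> : (q ^+ n * (x * y) = x * (q ^+ n * y))%R by rewrite mulrCA.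
have h1 := anM s x (q ^+ n * y)%R hn. have h2 := N1_ub y n hn hpr hK.
have h4 : 0 <= pr ^ n by apply pow_le; lra.
have h5 := an_ge0 s x hn. have h6 := an_ge0 s (q ^+ n * y)%R hn.
nra.
Qed.

Lemma N1D (A : comRingType) (nrm : A -> R) s q pr K x y :
  is_norm nrm -> 1 <= pr -> (forall n, an nrm s (q ^+ n) * pr ^ n <= K) ->
  N1 nrm s q pr (x + y)%R <= Rmax (N1 nrm s q pr x) (N1 nrm s q pr y).
Proof.
move=> hn hpr hK; apply: N1_le => // n.
rewrite mulrDr.
have h1 := anD s (q ^+ n * x)%R (q ^+ n * y)%R hn.
have h2 := N1_ub x n hn hpr hK. have h3 := N1_ub y n hn hpr hK.
have h4 : 0 <= pr ^ n by apply pow_le; lra.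
apply: Rle_trans (Rmult_le_compat_r _ _ _ h4 h1) _.
rewrite Rmult_comm -RmaxRmult //.
apply Rmax_lub; rewrite Rmult_comm.
  by apply: Rle_trans h2 (Rmax_l _ _).
by apply: Rle_trans h3 (Rmax_r _ _).
Qed.

Lemma N1N (A : comRingType) (nrm : A -> R) s q pr x :
  is_norm nrm -> N1 nrm s q pr (- x)%R = N1 nrm s q pr x.
Proof.
move=> hn; rewrite /N1; f_equal; apply: functional_extensionality => n.
by rewrite mulrN anN.
Qed.

Lemma N1q (A : comRingType) (nrm : A -> R) s q pr K x :
  is_norm nrm -> 1 <= pr -> (forall n, an nrm s (q ^+ n) * pr ^ n <= K) ->
  N1 nrm s q pr (q * x)%R <= N1 nrm s q pr x / pr.
Proof.
move=> hn hpr hK; apply: N1_le => // n.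
have := N1_ub x n.+1 hn hpr hK.
rewrite exprS -mulrA /=.
have -> : (q * (q ^+ n * x) = q ^+ n * (q * x))%R by rewrite mulrCA.
move=> H; apply le_div_of; first lra.
rewrite Rmult_assoc (Rmult_comm (pr ^ n)); exact H.
Qed.

Lemma N1w (A : comRingType) (nrm : A -> R) s q pr K w x :
  is_norm nrm -> 1 <= pr -> (forall n, an nrm s (q ^+ n) * pr ^ n <= K) ->
  (forall y, an nrm s (w * y)%R = an nrm s w * an nrm s y) -> 0 < an nrm s w ->
  N1 nrm s q pr (w * x)%R = an nrm s w * N1 nrm s q pr x.
Proof.
move=> hn hpr hK hw hw0; apply Rle_antisym.
  apply: N1_le => // n. rewrite mulrCA hw Rmult_assoc.
  apply Rmult_le_compat_l; first lra. exact: N1_ub.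
have H : N1 nrm s q pr x <= N1 nrm s q pr (w * x)%R / an nrm s w.
  apply: N1_le => // n.
  have := N1_ub (w * x)%R n hn hpr hK.
  rewrite mulrCA hw Rmult_assoc => H.
  apply le_div_of => //; rewrite Rmult_comm; exact H.
exact: mul_of_le_div.
Qed.
Definition Np (A : comRingType) (nrm : A -> R) (s : nat) (q : A) (pr : R) (x : A) : R :=
  rsup (fun y : A => N1 nrm s q pr (x * y)%R / N1 nrm s q pr y).

Lemma div_ge0 (a b : R) : 0 <= a -> 0 <= b -> 0 <= a / b.
Proof.
move=> ha hb; case: (Req_dec b 0) => [->|hb0].
  by rewrite /Rdiv Rinv_0 Rmult_0_r; lra.
apply Rmult_le_pos => //; apply Rlt_le, Rinv_0_lt_compat; lra.
Qed.

Lemma N1_ge0 (A : comRingType) (nrm : A -> R) s q pr K x :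
  is_norm nrm -> 1 <= pr -> (forall n, an nrm s (q ^+ n) * pr ^ n <= K) ->
  0 <= N1 nrm s q pr x.
Proof. move=> hn hpr hK; have := N1_ge x hn hpr hK; have := an_ge0 s x hn; lra. Qed.

Lemma ratio_le (A : comRingType) (nrm : A -> R) s q pr K x y :
  is_norm nrm -> 1 <= pr -> (forall n, an nrm s (q ^+ n) * pr ^ n <= K) ->
  N1 nrm s q pr (x * y)%R / N1 nrm s q pr y <= an nrm s x.
Proof.
move=> hn hpr hK.
have h0 := N1_ge0 y hn hpr hK. have h1 := N1M x y hn hpr hK. have h2 := an_ge0 s x hn.
case: (Req_dec (N1 nrm s q pr y) 0) => [->|hb0].
  by rewrite /Rdiv Rinv_0 Rmult_0_r.
apply (Rmult_le_reg_r (N1 nrm s q pr y)); first lra.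
rewrite /Rdiv Rmult_assoc Rinv_l //; lra.
Qed.

Lemma Np_ub (A : comRingType) (nrm : A -> R) s q pr K x y :
  is_norm nrm -> 1 <= pr -> (forall n, an nrm s (q ^+ n) * pr ^ n <= K) ->
  N1 nrm s q pr (x * y)%R / N1 nrm s q pr y <= Np nrm s q pr x.
Proof.
move=> hn hpr hK; rewrite /Np.
apply: (@rsup_ub A (fun y => N1 nrm s q pr (x * y)%R / N1 nrm s q pr y) (an nrm s x) y) => t.
exact: ratio_le.
Qed.

Lemma Np_le (A : comRingType) (nrm : A -> R) s q pr x M :
  (forall y, N1 nrm s q pr (x * y)%R / N1 nrm s q pr y <= M) -> Np nrm s q pr x <= M.
Proof. move=> H; exact: (@rsup_le A (fun y => N1 nrm s q pr (x * y)%R / N1 nrm s q pr y) M 1%R). Qed.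

Lemma Np_le_an (A : comRingType) (nrm : A -> R) s q pr K x :
  is_norm nrm -> 1 <= pr -> (forall n, an nrm s (q ^+ n) * pr ^ n <= K) ->
  Np nrm s q pr x <= an nrm s x.
Proof. move=> hn hpr hK; apply: Np_le => y; exact: ratio_le. Qed.

Lemma Np_ge (A : comRingType) (nrm : A -> R) s q pr K x :
  is_norm nrm -> 1 <= pr -> (forall n, an nrm s (q ^+ n) * pr ^ n <= K) ->
  N1 nrm s q pr x / N1 nrm s q pr 1%R <= Np nrm s q pr x.
Proof. move=> hn hpr hK; have := Np_ub x 1%R hn hpr hK; by rewrite mulr1. Qed.

Lemma Np_ge0 (A : comRingType) (nrm : A -> R) s q pr K x :
  is_norm nrm -> 1 <= pr -> (forall n, an nrm s (q ^+ n) * pr ^ n <= K) ->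
  0 <= Np nrm s q pr x.
Proof.
move=> hn hpr hK; have := Np_ge x hn hpr hK.
have := div_ge0 (N1_ge0 x hn hpr hK) (N1_ge0 1%R hn hpr hK); lra.
Qed.

Lemma ratio_cases (A : comRingType) (nrm : A -> R) s q pr K x y :
  is_norm nrm -> 1 <= pr -> (forall n, an nrm s (q ^+ n) * pr ^ n <= K) ->
  (N1 nrm s q pr y = 0 /\ N1 nrm s q pr (x * y)%R / N1 nrm s q pr y = 0) \/
  0 < N1 nrm s q pr y.
Proof.
move=> hn hpr hK; have h0 := N1_ge0 y hn hpr hK.
case: (Req_dec (N1 nrm s q pr y) 0) => [E|E]; last by right; lra.
by left; rewrite E /Rdiv Rinv_0 Rmult_0_r.
Qed.

Lemma NpD (A : comRingType) (nrm : A -> R) s q pr K x y :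
  is_norm nrm -> 1 <= pr -> (forall n, an nrm s (q ^+ n) * pr ^ n <= K) ->
  Np nrm s q pr (x + y)%R <= Rmax (Np nrm s q pr x) (Np nrm s q pr y).
Proof.
move=> hn hpr hK; apply: Np_le => z.
have hx := Np_ge0 x hn hpr hK. have hy := Np_ge0 y hn hpr hK.
case: (ratio_cases (x + y)%R z hn hpr hK) => [[_ ->]|hz].
  by apply: Rle_trans (Rmax_l _ _).
have h1 := N1D (x * z)%R (y * z)%R hn hpr hK.
have h2 := Np_ub x z hn hpr hK. have h3 := Np_ub y z hn hpr hK.
rewrite mulrDl.
apply (Rmult_le_reg_r (N1 nrm s q pr z)) => //.
rewrite /Rdiv Rmult_assoc Rinv_l; last lra.
rewrite Rmult_1_r; apply: Rle_trans h1 _.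
move: h2 h3; rewrite /Rdiv => h2 h3.
have e2 : N1 nrm s q pr (x * z)%R <= Np nrm s q pr x * N1 nrm s q pr z.
  apply (Rmult_le_reg_r (/ N1 nrm s q pr z)); first by apply Rinv_0_lt_compat.
  rewrite Rmult_assoc Rinv_r; lra.
have e3 : N1 nrm s q pr (y * z)%R <= Np nrm s q pr y * N1 nrm s q pr z.
  apply (Rmult_le_reg_r (/ N1 nrm s q pr z)); first by apply Rinv_0_lt_compat.
  rewrite Rmult_assoc Rinv_r; lra.
rewrite /Rmax; do 2 case: Rle_dec => ? //; nra.
Qed.
Lemma Np_ub' (A : comRingType) (nrm : A -> R) s q pr K x y :
  is_norm nrm -> 1 <= pr -> (forall n, an nrm s (q ^+ n) * pr ^ n <= K) ->
  0 < N1 nrm s q pr y -> N1 nrm s q pr (x * y)%R <= Np nrm s q pr x * N1 nrm s q pr y.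
Proof.
move=> hn hpr hK hy; have := Np_ub x y hn hpr hK.
move=> h; apply (Rmult_le_reg_r (/ N1 nrm s q pr y)); first by apply Rinv_0_lt_compat.
rewrite Rmult_assoc Rinv_r; lra.
Qed.

Lemma NpM (A : comRingType) (nrm : A -> R) s q pr K x y :
  is_norm nrm -> 1 <= pr -> (forall n, an nrm s (q ^+ n) * pr ^ n <= K) ->
  Np nrm s q pr (x * y)%R <= Np nrm s q pr x * Np nrm s q pr y.
Proof.
move=> hn hpr hK; apply: Np_le => z.
have hx := Np_ge0 x hn hpr hK. have hy := Np_ge0 y hn hpr hK.
case: (ratio_cases (x * y)%R z hn hpr hK) => [[_ ->]|hz].
  by apply Rmult_le_pos.
apply div_le_of => //.
rewrite -mulrA.
case: (ratio_cases x (y * z)%R hn hpr hK) => [[E _]|hyz].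
  have := N1M x (y * z)%R hn hpr hK; rewrite E Rmult_0_r => h.
  have h2 := N1_ge0 z hn hpr hK.
  have := Rmult_le_pos _ _ (Rmult_le_pos _ _ hx hy) h2. lra.
have h1 := Np_ub' x hn hpr hK hyz.
have h2 := Np_ub' y hn hpr hK hz.
have h3 := Rmult_le_compat_l _ _ _ hx h2.
rewrite Rmult_assoc; lra.
Qed.

Lemma Np1 (A : comRingType) (nrm : A -> R) s q pr K :
  is_norm nrm -> 1 <= pr -> (forall n, an nrm s (q ^+ n) * pr ^ n <= K) ->
  Np nrm s q pr 1%R = 1.
Proof.
move=> hn hpr hK; apply Rle_antisym.
  apply: Np_le => y; rewrite mul1r.
  case: (ratio_cases 1%R y hn hpr hK) => [[_]|hy]; first by rewrite mul1r => ->; lra.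
  rewrite /Rdiv Rinv_r; lra.
have := Np_ub 1%R 1%R hn hpr hK; rewrite mulr1.
have := N1_ge 1%R hn hpr hK; rewrite an1 // => h.
rewrite /Rdiv Rinv_r; lra.
Qed.

Lemma Npw (A : comRingType) (nrm : A -> R) s q pr K w x :
  is_norm nrm -> 1 <= pr -> (forall n, an nrm s (q ^+ n) * pr ^ n <= K) ->
  (forall y, an nrm s (w * y)%R = an nrm s w * an nrm s y) -> 0 < an nrm s w ->
  Np nrm s q pr (w * x)%R = an nrm s w * Np nrm s q pr x.
Proof.
move=> hn hpr hK hw hw0.
have E : forall y, N1 nrm s q pr (w * x * y)%R / N1 nrm s q pr y =
   an nrm s w * (N1 nrm s q pr (x * y)%R / N1 nrm s q pr y).
  by move=> y; rewrite -mulrA (N1w _ hn hpr hK hw hw0) /Rdiv Rmult_assoc.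
apply Rle_antisym.
  apply: Np_le => y; rewrite E.
  apply Rmult_le_compat_l; first lra. exact: Np_ub.
have H : Np nrm s q pr x <= Np nrm s q pr (w * x)%R / an nrm s w.
  apply: Np_le => y.
  have := Np_ub (w * x)%R y hn hpr hK; rewrite E => h.
  apply le_div_of => //; rewrite Rmult_comm; exact h.
exact: mul_of_le_div.
Qed.

Lemma Npq (A : comRingType) (nrm : A -> R) s q pr K x :
  is_norm nrm -> 1 <= pr -> (forall n, an nrm s (q ^+ n) * pr ^ n <= K) ->
  Np nrm s q pr (q * x)%R <= Np nrm s q pr x / pr.
Proof.
move=> hn hpr hK; apply: Np_le => y.
case: (ratio_cases (q * x)%R y hn hpr hK) => [[_ ->]|hy].
  apply div_ge0; [exact: Np_ge0 | lra].
apply div_le_of => //.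
have h1 := N1q (x * y)%R hn hpr hK. rewrite mulrA in h1.
have h2 := Np_ub' x hn hpr hK hy.
apply: Rle_trans h1 _.
rewrite /Rdiv; have hp : 0 < / pr by apply Rinv_0_lt_compat; lra.
nra.
Qed.

Lemma Npqk (A : comRingType) (nrm : A -> R) s q pr K k :
  is_norm nrm -> 1 <= pr -> (forall n, an nrm s (q ^+ n) * pr ^ n <= K) ->
  Np nrm s q pr (q ^+ k)%R <= (/ pr) ^ k.
Proof.
move=> hn hpr hK; elim: k => [|k IH].
  by rewrite expr0 (Np1 hn hpr hK) /=; lra.
rewrite exprS; apply: Rle_trans (Npq _ hn hpr hK) _.
rewrite /= /Rdiv Rmult_comm; apply Rmult_le_compat_l => //.
apply Rlt_le, Rinv_0_lt_compat; lra.
Qed.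
Lemma nrm_exp (A : comRingType) (nrm : A -> R) (x : A) n :
  is_norm nrm -> nrm (x ^+ n)%R <= nrm x ^ n.
Proof.
move=> hn; have [h0 [_ [_ [_ [hM h1]]]]] := hn.
elim: n => [|n IH]; first by rewrite expr0 h1 /=; lra.
rewrite exprS /=; apply: Rle_trans (hM _ _) _.
apply Rmult_le_compat_l => //.
Qed.

Lemma K_bound (A : comRingType) (nrm : A -> R) s q pr N :
  is_norm nrm -> 1 <= pr -> (1 <= N)%nat -> an nrm s (q ^+ N)%R * pr ^ N <= 1 ->
  forall n, an nrm s (q ^+ n)%R * pr ^ n <= (Rmax 1 (nrm q) ^ N) ^ s * pr ^ N.
Proof.
move=> hn hpr hN hqN n.
have [h0 _] := hn.
have hQ : 1 <= Rmax 1 (nrm q) by apply Rmax_l.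
elim: n {-2}n (leqnn n) => [|m IH] n hnm.
  rewrite leqn0 in hnm; move/eqP: hnm => ->.
  rewrite expr0 an1 //= ?Rmult_1_l ?Rmult_1_r.
  have h1 : 1 <= (Rmax 1 (nrm q) ^ N) ^ s.
    apply pow_R1_Rle, pow_R1_Rle => //.
  have h2 : 1 <= pr ^ N by apply pow_R1_Rle.
  nra.
case: (ltnP n N) => hnN.
  have a1 : an nrm s (q ^+ n)%R <= (Rmax 1 (nrm q) ^ N) ^ s.
    rewrite /an; apply pow_incr; split => //.
    apply: Rle_trans (nrm_exp q n hn) _.
    apply: Rle_trans (_ : Rmax 1 (nrm q) ^ n <= _).
      apply pow_incr; split => //; apply Rmax_r.
    apply Rle_pow => //; apply/leP; exact: ltnW.
  have a2 : pr ^ n <= pr ^ N by apply Rle_pow => //; apply/leP; exact: ltnW.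
  have a3 := an_ge0 s (q ^+ n)%R hn.
  have a4 : 0 <= pr ^ n by apply pow_le; lra.
  have a5 : 0 <= (Rmax 1 (nrm q) ^ N) ^ s by apply pow_le, pow_le; lra.
  nra.
have E : n = (N + (n - N))%N by rewrite subnKC.
have hlt : (n - N <= m)%N.
  have : (n - N < n)%N by rewrite ltn_subrL; apply/andP; split => //; exact: leq_trans hnN.
  move=> h; rewrite -ltnS; exact: leq_trans h hnm.
have IH' := IH _ hlt.
rewrite E exprD pow_add.
have b1 := anM s (q ^+ N)%R (q ^+ (n - N))%R hn.
have b2 := an_ge0 s (q ^+ N)%R hn.
have b3 := an_ge0 s (q ^+ (n - N))%R hn.
have b4 : 0 <= pr ^ N by apply pow_le; lra.
have b5 : 0 <= pr ^ (n - N) by apply pow_le; lra.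
have b6 := an_ge0 s (q ^+ N * q ^+ (n - N))%R hn.
set X := an nrm s (q ^+ N * q ^+ (n - N))%R in b1 b6 *.
set a := an nrm s (q ^+ N)%R in b1 b2 hqN *.
set b := an nrm s (q ^+ (n - N))%R in b1 b3 IH' *.
have c1 : X * (pr ^ N * pr ^ (n - N)) <= (a * pr ^ N) * (b * pr ^ (n - N)).
  have := Rmult_le_compat_r _ _ _ (Rmult_le_pos _ _ b4 b5) b1. lra.
have c2 : (a * pr ^ N) * (b * pr ^ (n - N)) <= 1 * (b * pr ^ (n - N)).
  apply Rmult_le_compat_r => //; exact: Rmult_le_pos.
lra.
Qed.
Lemma rpow_nat (x : R) (s : nat) : 0 <= x -> (1 <= s)%nat -> rpow x (INR s) = x ^ s.
Proof.
move=> hx hs; rewrite /rpow; case: Req_EM_T => [E|h] /=.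
  by rewrite E pow_i //; apply/ltP.
by rewrite Rpower_pow //; lra.
Qed.

Lemma nrm_nat (A : comRingType) (nrm : A -> R) (m : nat) : is_norm nrm -> nrm (m%:R : A) <= 1.
Proof.
move=> hn; have [h0 [hz [_ [hD [_ h1]]]]] := hn.
elim: m => [|m IH]; first by rewrite (proj2 (hz 0%R) erefl); lra.
rewrite -natr1; apply: Rle_trans (hD _ _) _; apply Rmax_lub; lra.
Qed.

Lemma f_bdd (p : positive) (A : comRingType) (nrm : A -> R) (f : padicZ p -> A) (N : nat) :
  is_norm nrm -> zp_ring_hom f ->
  (forall y, zp_seq y N = Z0 -> nrm (f y) < 1) -> forall u, nrm (f u) <= 1.
Proof.
move=> hn hf HN u; have [h0 [hz [_ [hD _]]]] := hn.
have [fa _] := hf.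
rewrite (padic_split u N) fa.
apply: Rle_trans (hD _ _) _; apply Rmax_lub.
  have [r0 _] := padic_range u N.
  rewrite -(Z2Nat.id (zp_seq u N)) // f_nat //; exact: nrm_nat.
have := HN _ (padic_split_N u N); lra.
Qed.
Lemma main_aux (p : positive) (A : comRingType) (nrm : A -> R) (w : A)
  (hBT : is_banach_tate nrm w) (f : padicZ p -> A) (hf : zp_ring_hom f)
  (hfc : zp_continuous nrm f) :
  exists nrm' : A -> R,
    is_banach_tate_zp_alg nrm' w f /\
    exists s : R, Rlt (IZR 0) s /\
      bounded_equivalent (fun r => rpow (nrm r) s) nrm'.
Proof.
have [hn [hc [[v hv] [hw1 hwm]]]] := hBT.
have [h0 [hz [hNg [hD [hM h1]]]]] := hn.
have [fa [fm f1]] := hf.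
set q := f (zc p (Z.pos p)).
set pr := IZR (Z.pos p).
have hpr : 1 <= pr by apply IZR_le; lia.
have [N HN] := hfc (zp_zero p) 1 Rlt_0_1.
have HN' : forall y, zp_seq y N = Z0 -> nrm (f y) < 1.
  move=> y hy; have := HN y.
  rewrite f_zero // subr0; apply.
  by rewrite hy /= Z.mod_0_l //; apply ppow_neq0.
have hqN : nrm (q ^+ N)%R < 1.
  rewrite /q -f_pow //; apply HN'.
  by rewrite /= Z_mod_same_full.
have hN1 : (1 <= N)%nat.
  case: N {HN HN'} hqN => [|N] //; by rewrite expr0 h1; lra.
have hbdd := f_bdd hn hf HN'.
set r := Rmax (nrm (q ^+ N)%R) (/ 2).
have hr0 : 0 < r by apply: Rlt_le_trans (Rmax_r _ _); lra.
have hr1 : r < 1 by apply Rmax_lub_lt; lra.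
have hprN : 0 < pr ^ N by apply pow_lt; lra.
have [S HS] := pow_lt_1_zero r ltac:(rewrite Rabs_right; lra) (/ pr ^ N)
   ltac:(by apply Rinv_0_lt_compat).
set s := S.+1.
have hs : (1 <= s)%nat by [].
have hsq : an nrm s (q ^+ N)%R * pr ^ N <= 1.
  have e1 : an nrm s (q ^+ N)%R <= r ^ s.
    rewrite /an; apply pow_incr; split; [apply h0 | apply Rmax_l].
  have e2 : r ^ s < / pr ^ N.
    have := HS s ltac:(apply/leP; exact: leqnSn).
    rewrite Rabs_right //; apply Rle_ge, pow_le; lra.
  have e3 : / pr ^ N * pr ^ N = 1 by rewrite Rinv_l; lra.
  have := Rmult_le_compat_r _ _ _ (Rlt_le _ _ hprN) e1.
  have := Rmult_lt_compat_r _ _ _ hprN e2. lra.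
set K := (Rmax 1 (nrm q) ^ N) ^ s * pr ^ N.
have hK : forall n, an nrm s (q ^+ n)%R * pr ^ n <= K := K_bound hn hpr hN1 hsq.
have hK1 : 1 <= K.
  have := hK 0%nat; rewrite expr0 an1 //= -/K; lra.
have lowb : forall x, an nrm s x <= K * Np nrm s q pr x.
  move=> x.
  have e1 := N1_ge x hn hpr hK.
  have e2 := N1_leK 1%R hn hpr hK. rewrite an1 // Rmult_1_r in e2.
  have e3 : 0 < N1 nrm s q pr 1%R.
    have := N1_ge 1%R hn hpr hK; rewrite an1 //; lra.
  have e4 := Np_ub' x hn hpr hK e3. rewrite mulr1 in e4.
  have e5 := Np_ge0 x hn hpr hK.
  have := Rmult_le_compat_l _ _ _ e5 e2. lra.
have hsR : 0 < INR s by apply lt_0_INR; apply/ltP.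
have hwa : forall y, an nrm s (w * y)%R = an nrm s w * an nrm s y.
  by move=> y; rewrite /an hwm Rpow_mult_distr.
have hw0 : 0 < nrm w.
  have := h0 w; case/Rle_lt_or_eq_dec => // E.
  have Ew : w = 0%R by apply hz.
  move: hv; rewrite Ew mul0r => E0.
  have := h1; rewrite -E0 (proj2 (hz 0%R) erefl) => E1.
  exfalso; apply R1_neq_R0; lra.
have haw : 0 < an nrm s w by apply pow_lt.
have hNpw : Np nrm s q pr w = an nrm s w.
  have := Npw 1%R hn hpr hK hwa haw.
  by rewrite mulr1 (Np1 hn hpr hK) Rmult_1_r.
exists (Np nrm s q pr).
split; last first.
  exists (INR s); split => //.
  exists (/ K), 1; split; first by apply Rinv_0_lt_compat; lra.
  split; first lra.
  move=> x; rewrite rpow_nat //; split.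
    have := lowb x; rewrite /an => e.
    have hK0 : 0 < K by lra.
    apply (Rmult_le_reg_l K) => //; rewrite -Rmult_assoc Rinv_r; lra.
  rewrite Rmult_1_l; exact: Np_le_an.
have hnorm : is_norm (Np nrm s q pr).
  split; first by move=> x; exact: Np_ge0.
  split.
    move=> x; split => [E|->].
      apply: (@an_eq0 A nrm s x hn); have := lowb x; rewrite E Rmult_0_r => e.
      have := an_ge0 s x hn. move=> e'. apply Rle_antisym; lra.
    have := Np_le_an 0%R hn hpr hK; rewrite an0 //.
    have := Np_ge0 0%R hn hpr hK; lra.
  split.
    move=> x; rewrite /Np; f_equal; apply: functional_extensionality => y.
    by rewrite mulNr N1N.
  split; first by move=> x y; exact: NpD.
  split; first by move=> x y; exact: NpM.
  exact: Np1.
split; last split => //.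
  split => //; split.
    move=> u HC.
    have [l Hl] : exists l, forall eps, 0 < eps -> exists N0, forall n, (N0 <= n)%N -> nrm (u n - l)%R < eps.
      apply: hc => eps he.
      have hes : 0 < eps ^ s / K by apply Rdiv_lt_0_compat; [apply pow_lt | lra].
      have [N0 H0] := HC _ hes.
      exists N0 => m n hm hn'.
      have := H0 m n hm hn'.
      have := lowb (u m - u n)%R.
      rewrite /an => e1 e2.
      have e3 : nrm (u m - u n)%R ^ s < eps ^ s.
        apply: Rle_lt_trans e1 _.
        have := Rmult_lt_compat_l K _ _ ltac:(lra) e2.
        by rewrite /Rdiv (Rmult_comm (eps ^ s)) -Rmult_assoc Rinv_r ?Rmult_1_l; lra.
      case: (Rlt_le_dec (nrm (u m - u n)%R) eps) => // e4.
      have := pow_incr eps (nrm (u m - u n)%R) s ltac:(split; lra). lra.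
    exists l => eps he.
    have hd : 0 < Rmin eps 1 by apply Rmin_glb_lt; lra.
    have [N0 H0] := Hl _ hd.
    exists N0 => n hn'.
    have e1 := H0 n hn'.
    have e2 := Np_le_an (u n - l)%R hn hpr hK.
    have e3 : an nrm s (u n - l)%R <= nrm (u n - l)%R.
      apply pow_le_self => //; split; first by apply h0.
      have := Rmin_r eps 1; lra.
    have := Rmin_l eps 1; lra.
  split; first by exists v.
  split; last first.
    move=> y; rewrite hNpw; exact: Npw.
  rewrite hNpw /an.
  have := @pow_le_self (nrm w) s (conj (h0 w) (Rlt_le _ _ hw1)) hs; lra.
move=> x; rewrite /padic_norm.
case: excluded_middle_informative => [H|H].
  case: (ex_minnP H) => m Hm Hmin.
  have Hm0 : (0 < m)%N.
    case: m Hm Hmin => // Hm _.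
    move: Hm; rewrite /zp_nonzero_at.
    have := padic_range x 0; rewrite /= => e.
    have -> : zp_seq x 0 = Z0 by lia.
    by [].
  have hk : zp_seq x m.-1 = Z0.
    case E: (Z.eqb (zp_seq x m.-1) Z0); first by apply Z.eqb_eq.
    have := Hmin m.-1; rewrite /zp_nonzero_at E => /(_ isT).
    move=> hle; exfalso; move: hle Hm0; clear.
    by case: m => //= k; rewrite ltnn.
  have -> : f x = (q ^+ m.-1 * f (padic_div hk))%R.
    by rewrite {1}(padic_div_spec hk) fm /q f_pow.
  apply: Rle_trans (NpM _ _ hn hpr hK) _.
  rewrite -/pr -(Rmult_1_r ((/ pr) ^ m.-1)).
  apply Rmult_le_compat.
  - exact: Np_ge0.
  - exact: Np_ge0.
  - exact: Npqk.
  apply: Rle_trans (Np_le_an _ hn hpr hK) _.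
  have := @pow_le_self (nrm (f (padic_div hk))) s (conj (h0 _) (hbdd _)) hs.
  have := hbdd (padic_div hk). rewrite /an; lra.
have -> : x = zp_zero p.
  apply: padic_eq => n /=; rewrite Z.mod_0_l; last by apply ppow_neq0.
  case E: (Z.eqb (zp_seq x n) Z0); first by apply Z.eqb_eq.
  exfalso; apply: H; exists n; by rewrite /zp_nonzero_at E.
rewrite f_zero //.
have := Np_le_an 0%R hn hpr hK; rewrite an0 //.
Qed.

Local Close Scope R_scope.
Local Close Scope ring_scope.

Theorem mainTheorem3 (p : positive) (hp : Znumtheory.prime (Z.pos p))
  (A : comRingType) (nrm : A -> R) (w : A)
  (hBT : is_banach_tate nrm w) (hN : noetherian A)
  (f : padicZ p -> A) (hf : zp_ring_hom f) (hfc : zp_continuous nrm f) :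
  exists nrm' : A -> R,
    is_banach_tate_zp_alg nrm' w f /\
    exists s : R, Rlt (IZR 0) s /\
      bounded_equivalent (fun r => rpow (nrm r) s) nrm'.
Proof.
exact: (main_aux hBT hf hfc).
Qed.
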